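(* Let $S$ and $T$ be finite semigroups without zero and let $h\ge0$ be an integer. Suppose that every language (over any finite alphabet) recognised by a finite Rees zero-matrix semigroup over $S$ has generalised star-height at most $h$, and likewise every language recognised by a finite Rees zero-matrix semigroup over $T$ has generalised star-height at most $h$. Then every language recognised by a finite Rees zero-matrix semigroup over the direct product $S\times T$ has generalised star-height at most $h$.
   Context: For a semigroup $U$ without zero, non-empty sets $I,\Lambda$ and a $\Lambda\times I$ matrix $M=(m_{\lambda i})$ with entries in $U\cup\{\mathbf{0}\}$ ($\mathbf{0}$ a new symbol), the Rees zero-matrix semigroup over $U$, $M^{0}[U;I,\Lambda;M]$, is $(I\times U\times\Lambda)\cup\{\mathbf{0}\}$ with $(i,u,\lambda)(j,v,\mu)=(i,u\,m_{\lambda j}\,v,\mu)$ if $m_{\lambda j}\ne\mathbf{0}$, $=\mathbf{0}$ if $m_{\lambda j}=\mathbf{0}$, and $x\mathbf{0}=\mathbf{0}x=\mathbf{0}$; it is finite when $U$, $I$, $\Lambda$ are finite. A language $L\subseteq A^{+}$ over a finite alphabet $A$ is recognised by a semigroup $V$ if there is a semigroup morphism $\psi:A^{+}\to V$ and a subset $X\subseteq V$ with $L=X\psi^{-1}$. Generalised regular expressions over $A$: $\emptyset$, $\varepsilon$ and each letter are expressions; if $E,F$ are expressions so are $E\cup F$, $EF$, $E^{\ast}$, $E^{c}$ (complement in $A^{\ast}$). Star-height: $h(\emptyset)=h(\varepsilon)=h(a)=0$, $h(E\cup F)=h(EF)=\max\{h(E),h(F)\}$, $h(E^{\ast})=h(E)+1$,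 $h(E^{c})=h(E)$; the star-height of a language is the minimum of $h(E)$ over expressions $E$ representing it. *)

(* Defs.v *)
From mathcomp Require Import all_boot.
Set Implicit Arguments. Unset Strict Implicit. Unset Printing Implicit Defensive.

(* A semigroup is a carrier with an associative binary operation
   (associativity is an explicit hypothesis where needed). *)

Definition is_zero (V : Type) (mul : V -> V -> V) (z : V) : Prop :=
  forall x, mul z x = z /\ mul x z = z.

Definition without_zero (V : Type) (mul : V -> V -> V) : Prop :=
  ~ (exists z, is_zero mul z).

Definition prod_mul (S T : Type) (mulS : S -> S -> S) (mulT : T -> T -> T)
  (x y : S * T) : S * T := (mulS x.1 y.1, mulT x.2 y.2).

(* Rees zero-matrix semigroup M^0[U; I, Lam; P]: carrier (I * U * Lam) + {0},
   with 0 represented by None; P : Lam -> I -> U + {0} (None = the new zero). *)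
Definition rees_mul (U I Lam : Type) (mulU : U -> U -> U)
  (P : Lam -> I -> option U) (x y : option (I * U * Lam)) : option (I * U * Lam) :=
  match x, y with
  | Some (i, u, l), Some (j, v, m) =>
      match P l j with
      | Some p => Some (i, mulU (mulU u p) v, m)
      | None => None
      end
  | _, _ => None
  end.

Definition lang (A : Type) := seq A -> Prop.

(* L (a subset of A^+) is recognised by (V, mul): there is a semigroup
   morphism psi : A^+ -> V (the value of psi on the empty word is irrelevant)
   and X a subset of V with L = X psi^{-1}. *)
Definition recognised (A V : Type) (mul : V -> V -> V) (L : lang A) : Prop :=
  exists psi : seq A -> V,
    (forall u v, u <> [::] -> v <> [::] -> psi (u ++ v) = mul (psi u) (psi v)) /\
    exists X : V -> Prop, forall w, L w <-> (w <> [::] /\ X (psi w)).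

Inductive gre (A : Type) : Type :=
| GEmpty : gre A
| GEps : gre A
| GLet : A -> gre A
| GUnion : gre A -> gre A -> gre A
| GConcat : gre A -> gre A -> gre A
| GStar : gre A -> gre A
| GCompl : gre A -> gre A.

Arguments GEmpty {A}.
Arguments GEps {A}.

Fixpoint gre_lang (A : eqType) (E : gre A) : lang A :=
  match E with
  | GEmpty => fun _ => False
  | GEps => fun w => w = [::]
  | GLet a => fun w => w = [:: a]
  | GUnion E F => fun w => gre_lang E w \/ gre_lang F w
  | GConcat E F => fun w => exists u v, w = u ++ v /\ gre_lang E u /\ gre_lang F v
  | GStar E => fun w => exists ws : seq (seq A),
                 w = flatten ws /\ (forall u, u \in ws -> gre_lang E u)
  | GCompl E => fun w => ~ gre_lang E w
  end.

Fixpoint star_height (A : Type) (E : gre A) : nat :=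
  match E with
  | GEmpty | GEps | GLet _ => 0
  | GUnion E F | GConcat E F => maxn (star_height E) (star_height F)
  | GStar E => (star_height E).+1
  | GCompl E => star_height E
  end.

Definition star_height_le (A : eqType) (h : nat) (L : lang A) : Prop :=
  exists E : gre A, star_height E <= h /\ forall w, L w <-> gre_lang E w.

(* Finite Rees zero-matrix semigroups: I, Lam non-empty finite sets. *)
Definition rees_star_height_le (U : Type) (mulU : U -> U -> U) (h : nat) : Prop :=
  forall (I Lam A : finType) (P : Lam -> I -> option U),
    (exists i : I, True) -> (exists l : Lam, True) ->
    forall L : lang A, recognised (rees_mul mulU P) L -> star_height_le h L.

(* Main.v *)
From Stdlib Require Import Classical.
Require Import Defs.
From mathcomp Require Import all_boot.
Set Implicit Arguments.

Definition inter_gre (A : Type) (E F : gre A) : gre A :=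
  GCompl (GUnion (GCompl E) (GCompl F)).

Lemma inter_gre_lang (A : eqType) (E F : gre A) w :
  gre_lang (inter_gre E F) w <-> gre_lang E w /\ gre_lang F w.
Proof.
rewrite /=; split.
- move=> H; split; apply: NNPP => K; apply: H; tauto.
- move=> [H1 H2] [K|K]; tauto.
Qed.

Lemma union_lemma (A : eqType) (Z : eqType) (h : nat) (X : Z -> Prop)
  (L1 L2 : Z -> lang A) :
  (forall z, star_height_le h (L1 z)) -> (forall z, star_height_le h (L2 z)) ->
  forall s : seq Z, exists E : gre A, star_height E <= h /\
    forall w, (exists z, z \in s /\ X z /\ L1 z w /\ L2 z w) <-> gre_lang E w.
Proof.
move=> H1 H2; elim=> [|z s [E [HE IH]]].
  exists GEmpty; split=> // w; split=> // [[z []]]; by rewrite in_nil.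
case: (classic (X z)) => Xz.
- have [E1 [h1 e1]] := H1 z; have [E2 [h2 e2]] := H2 z.
  exists (GUnion (inter_gre E1 E2) E); split.
    by rewrite /= geq_max /= geq_max h1 h2.
  move=> w; rewrite /=; split.
  + move=> [z' [Hin [Xz' [a b]]]]; move: Hin; rewrite in_cons => /orP [/eqP Ez|Hin].
      subst z'; left; apply/inter_gre_lang; split; [apply/e1|apply/e2]; done.
    right; apply/IH; by exists z'.
  + move=> [/inter_gre_lang [a b]|K].
      exists z; rewrite in_cons eqxx; split=> //; split=> //; split; [apply/e1|apply/e2]; done.
    have [z' [Hin R]] := (proj2 (IH w) K); exists z'; by rewrite in_cons Hin orbT.
- exists E; split=> // w; split.
  + move=> [z' [Hin [Xz' R]]]; move: Hin; rewrite in_cons => /orP [/eqP Ez|Hin].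
      by subst.
    apply/IH; by exists z'.
  + move=> K; have [z' [Hin R]] := (proj2 (IH w) K); exists z'; by rewrite in_cons Hin orbT.
Qed.

Definition f1 (I S T Lam : Type) (x : option (I * (S * T) * Lam)) : option (I * S * Lam) :=
  match x with Some (i, u, l) => Some (i, u.1, l) | None => None end.
Definition f2 (I S T Lam : Type) (x : option (I * (S * T) * Lam)) : option (I * T * Lam) :=
  match x with Some (i, u, l) => Some (i, u.2, l) | None => None end.

Lemma f12_inj (I S T Lam : Type) (x y : option (I * (S * T) * Lam)) :
  f1 x = f1 y -> f2 x = f2 y -> x = y.
Proof.
case: x => [[[i [s t]] l]|]; case: y => [[[i' [s' t']] l']|] //= [-> -> ->] [->] //.
Qed.

Theorem theorem3p5 (S T : finType) (mulS : S -> S -> S) (mulT : T -> T -> T)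
  (h : nat) :
  associative mulS -> associative mulT ->
  without_zero mulS -> without_zero mulT ->
  rees_star_height_le mulS h -> rees_star_height_le mulT h ->
  rees_star_height_le (prod_mul mulS mulT) h.
Proof.
move=> _ _ _ _ HS HT I Lam A P hI hL L [psi [Hm [X HX]]].
pose P1 := fun l i => match P l i with Some p => Some p.1 | None => None end.
pose P2 := fun l i => match P l i with Some p => Some p.2 | None => None end.
have M1 : forall x y, f1 (rees_mul (prod_mul mulS mulT) P x y) = rees_mul mulS P1 (f1 x) (f1 y).
  move=> [[[i u] l]|] [[[j v] m]|] //=; rewrite /P1; by case: (P l j).
have M2 : forall x y, f2 (rees_mul (prod_mul mulS mulT) P x y) = rees_mul mulT P2 (f2 x) (f2 y).
  move=> [[[i u] l]|] [[[j v] m]|] //=; rewrite /P2; by case: (P l j).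
pose V := option (I * (S * T)%type * Lam)%type.
pose L1 := fun (z : V) (w : seq A) => w <> [::] /\ f1 (psi w) = f1 z.
pose L2 := fun (z : V) (w : seq A) => w <> [::] /\ f2 (psi w) = f2 z.
have H1 : forall z, star_height_le h (L1 z).
  move=> z; apply: (HS I Lam A P1 hI hL); exists (fun w => f1 (psi w)); split.
    by move=> u v nu nv; rewrite Hm // M1.
  by exists (fun y => y = f1 z).
have H2 : forall z, star_height_le h (L2 z).
  move=> z; apply: (HT I Lam A P2 hI hL); exists (fun w => f2 (psi w)); split.
    by move=> u v nu nv; rewrite Hm // M2.
  by exists (fun y => y = f2 z).
have [E [hE eE]] := @union_lemma A _ h X L1 L2 H1 H2 (enum {: V}).
exists E; split=> // w; rewrite -eE HX; split.
- move=> [nw Xw]; exists (psi w); rewrite mem_enum; split=> //.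
- move=> [z [_ [Xz [[nw e1] [_ e2]]]]]; split=> //; by rewrite (@f12_inj _ _ _ _ _ _ e1 e2).
Qed.
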